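(* Let $T$ be an anonymous, non-counterfactual, reasonable comparison test. If $T\not\sim\mathcal{D}$, then $T$ is not error-free.
   Context: Let $\Omega=\{0,1\}$ and let $\Omega^\infty$ be the set of infinite sequences $\omega=(\omega_1,\omega_2,\dots)$; $\omega^t=(\omega_1,\dots,\omega_t)$ denotes the prefix and also the cylinder set $\{\hat\omega:\hat\omega^t=\omega^t\}$; $\Omega^\infty$ carries the $\sigma$-algebra generated by cylinders. $\Delta(\Omega)$ is the set of probability distributions on $\Omega$. A forecasting strategy is a function $f:\bigcup_{t\ge 0}(\Omega\times\Delta(\Omega)\times\Delta(\Omega))^t\to\Delta(\Omega)$; $F$ is the set of all forecasting strategies. For $f=(f_0,f_1)$ and $\omega$, the play path $h=h(\omega,f_0,f_1)\in(\Omega\times\Delta(\Omega)\times\Delta(\Omega))^\infty$ is defined by $h^0=\emptyset$, $h^t=(h^{t-1},(\omega_t,f_0(h^{t-1}),f_1(h^{t-1})))$. The induced measures satisfy $P_i^f(\omega^t)=\prod_{n=1}^t f_i(h^{n-1})[\omega_n]$, $i\in\{0,1\}$. A comparison test is a function $T:\Omega^\infty\times F\times F\to\{0,\tfrac12,1\}$, measurable in $\omega$ for each fixed pair; write $\{T(\cdot,f)=k\}=\{\omega:T(\omega,f_0,f_1)=k\}$. $T$ is anonymous if $T(\omega,f_0,f_1)=1-T(\omega,f_1,f_0)$ always. $T$ is non-counterfactual if there is $\hat T:(\Omega\times\Delta(\Omega)\times\Delta(\Omega))^\infty\to\{0,\tfrac12,1\}$ with $T(\omega,f_0,f_1)=\hat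 T(h(\omega,f_0,f_1))$. $T$ is error-free if for all $f$ and $i\in\{0,1\}$, $P_{1-i}^f(\{T(\cdot,f)=i\})=0$. $T$ is reasonable if for all $f$, $i\in\{0,1\}$ and measurable $A$: $P_i^f(A)>0$ and $P_{1-i}^f(A)=0$ imply $P_i^f(A\cap\{T(\cdot,f)=i\})>0$. $T\sim\hat T$ means: for every pair $f$ and every $i\in\{0,1\}$, $P_i^f(\{\omega:T(\omega,f_0,f_1)\ne\hat T(\omega,f_0,f_1)\})=0$. Likelihood ratios along $h=h(\omega,f_0,f_1)$: $D^t_{f_0}f_1(\omega)=\prod_{n=1}^t \frac{f_1(h^{n-1})[\omega_n]}{f_0(h^{n-1})[\omega_n]}$ and $D^t_{f_1}f_0(\omega)=\prod_{n=1}^t \frac{f_0(h^{n-1})[\omega_n]}{f_1(h^{n-1})[\omega_n]}$. For $(j,k)\in\{(0,1),(1,0)\}$, $\overline{D}_{f_j}f_k=\limsup_t D^t_{f_j}f_k$ and $\underline{D}_{f_j}f_k=\liminf_t D^t_{f_j}f_k$ if $f_j(h^{n-1})[\omega_n]>0$ for all $n$, and both $=+\infty$ otherwise; if they coincide and are finite the common value is the derivative $D_{f_j}f_k(\omega)$. The derivative test: $\mathcal{D}(\omega,f_0,f_1)=1$ if $D_{f_1}f_0(\omega)$ exists and equals $0$; $=0$ if $D_{f_0}f_1(\omega)$ exists and equals $0$; $=\tfrac12$ otherwise. *)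

(* Defs.v *)
From Stdlib Require Import Reals List Classical ClassicalEpsilon.
Open Scope R_scope.

(* Omega = {0,1} is bool (false = 0, true = 1).
   An infinite sequence omega = (omega_1, omega_2, ...) is  w : nat -> bool,
   with omega_{n+1} = w n. *)
Definition Seq := nat -> bool.

(* Delta(Omega): probability distributions on {0,1}, given by the
   probability p of outcome 1. *)
Definition Dist := { p : R | 0 <= p <= 1 }.
Definition prob (d : Dist) (b : bool) : R :=
  if b then proj1_sig d else 1 - proj1_sig d.

Definition Entry := (bool * Dist * Dist)%type.
Definition Hist := list Entry.
Definition Strategy := Hist -> Dist.

Fixpoint hist (f0 f1 : Strategy) (w : Seq) (t : nat) : Hist :=
  match t with
  | O => nil
  | S n => hist f0 f1 w n ++ ((w n, f0 (hist f0 f1 w n), f1 (hist f0 f1 w n)) :: nil)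
  end.

Definition path (f0 f1 : Strategy) (w : Seq) : nat -> Entry :=
  fun n => (w n, f0 (hist f0 f1 w n), f1 (hist f0 f1 w n)).

Definition fsel (i : bool) (f0 f1 : Strategy) : Strategy := if i then f1 else f0.

Fixpoint cyl_mass (i : bool) (f0 f1 : Strategy) (w : Seq) (t : nat) : R :=
  match t with
  | O => 1
  | S n => cyl_mass i f0 f1 w n * prob (fsel i f0 f1 (hist f0 f1 w n)) (w n)
  end.

Definition cyl (w : Seq) (t : nat) : Seq -> Prop :=
  fun v => forall n, (n < t)%nat -> v n = w n.

Inductive measurable : (Seq -> Prop) -> Prop :=
  | meas_cyl : forall w t, measurable (cyl w t)
  | meas_compl : forall A, measurable A -> measurable (fun v => ~ A v)
  | meas_union : forall (A : nat -> Seq -> Prop),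
      (forall k, measurable (A k)) -> measurable (fun v => exists k, A k v)
  | meas_ext : forall A B, (forall v, A v <-> B v) -> measurable A -> measurable B.

Fixpoint psum (a : nat -> R) (N : nat) : R :=
  match N with O => 0 | S n => psum a n + a n end.

(* P_i^f(A) = 0, via the outer measure generated by cylinders
   (Caratheodory extension): A can be covered by countably many
   cylinders of arbitrarily small total P_i^f-mass. *)
Definition null (i : bool) (f0 f1 : Strategy) (A : Seq -> Prop) : Prop :=
  forall eps, 0 < eps ->
    exists (ws : nat -> Seq) (ts : nat -> nat),
      (forall v, A v -> exists k, cyl (ws k) (ts k) v) /\
      (forall N, psum (fun k => cyl_mass i f0 f1 (ws k) (ts k)) N <= eps).

Inductive Out := O0 | Ohalf | O1.
Definition flip (o : Out) : Out :=
  match o with O0 => O1 | Ohalf => Ohalf | O1 => O0 end.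
Definition outb (i : bool) : Out := if i then O1 else O0.

Definition Test := Seq -> Strategy -> Strategy -> Out.

Definition test_measurable (T : Test) : Prop :=
  forall f0 f1 k, measurable (fun w => T w f0 f1 = k).

Definition anonymous (T : Test) : Prop :=
  forall w f0 f1, T w f0 f1 = flip (T w f1 f0).

Definition non_counterfactual (T : Test) : Prop :=
  exists That : (nat -> Entry) -> Out,
    forall w f0 f1, T w f0 f1 = That (path f0 f1 w).

Definition error_free (T : Test) : Prop :=
  forall f0 f1 (i : bool), null (negb i) f0 f1 (fun w => T w f0 f1 = outb i).

(* P_i(A) > 0 for measurable A is rendered as ~ null i A *)
Definition reasonable (T : Test) : Prop :=
  forall f0 f1 (i : bool) (A : Seq -> Prop),
    measurable A -> ~ null i f0 f1 A -> null (negb i) f0 f1 A ->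
    ~ null i f0 f1 (fun w => A w /\ T w f0 f1 = outb i).

Definition test_equiv (T T' : Test) : Prop :=
  forall f0 f1 (i : bool), null i f0 f1 (fun w => T w f0 f1 <> T' w f0 f1).

Fixpoint ratio (fj fk : Strategy) (h : nat -> Hist) (w : Seq) (t : nat) : R :=
  match t with
  | O => 1
  | S n => ratio fj fk h w n * (prob (fk (h n)) (w n) / prob (fj (h n)) (w n))
  end.

(* "D_{fj} fk (omega) exists and equals 0": fj gives positive probability
   to every realized outcome and D^t_{fj} fk -> 0 *)
Definition deriv_zero (f0 f1 : Strategy) (j : bool) (w : Seq) : Prop :=
  let fj := fsel j f0 f1 in
  let fk := fsel (negb j) f0 f1 in
  (forall n, 0 < prob (fj (hist f0 f1 w n)) (w n)) /\
  Un_cv (ratio fj fk (hist f0 f1 w) w) 0.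

Definition Dtest : Test := fun w f0 f1 =>
  if excluded_middle_informative (deriv_zero f0 f1 true w) then O1
  else if excluded_middle_informative (deriv_zero f0 f1 false w) then O0
  else Ohalf.

(* Main.v *)
Require Import Defs.
From Stdlib Require Import Reals List Classical ClassicalEpsilon Lia Lra.
Open Scope R_scope.

Definition agree (v w : Seq) (t : nat) : Prop := forall n, (n < t)%nat -> v n = w n.

Lemma hist_ext f0 f1 v w t : agree v w t -> hist f0 f1 v t = hist f0 f1 w t.
Proof.
  induction t as [|t IH]; intros H; simpl; auto.
  rewrite IH by (intros n Hn; apply H; lia).
  rewrite (H t) by lia. reflexivity.
Qed.

Lemma mass_ext i f0 f1 v w t : agree v w t -> cyl_mass i f0 f1 v t = cyl_mass i f0 f1 w t.
Proof.
  induction t as [|t IH]; intros H; simpl; auto.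
  rewrite IH by (intros n Hn; apply H; lia).
  rewrite (hist_ext f0 f1 v w t) by (intros n Hn; apply H; lia).
  rewrite (H t) by lia. reflexivity.
Qed.

Lemma prob_ge0 d b : 0 <= prob d b.
Proof. destruct d as [p Hp]; destruct b; simpl; lra. Qed.
Lemma prob_le1 d b : prob d b <= 1.
Proof. destruct d as [p Hp]; destruct b; simpl; lra. Qed.
Lemma prob_sum d : prob d false + prob d true = 1.
Proof. destruct d as [p Hp]; simpl; lra. Qed.

Lemma mass_ge0 i f0 f1 w t : 0 <= cyl_mass i f0 f1 w t.
Proof.
  induction t; simpl; [lra|]. apply Rmult_le_pos; auto. apply prob_ge0.
Qed.

Lemma mass_mono i f0 f1 w s t : (s <= t)%nat -> cyl_mass i f0 f1 w t <= cyl_mass i f0 f1 w s.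
Proof.
  induction 1; [lra|]. simpl.
  pose proof (mass_ge0 i f0 f1 w m). pose proof (prob_le1 (fsel i f0 f1 (hist f0 f1 w m)) (w m)).
  pose proof (prob_ge0 (fsel i f0 f1 (hist f0 f1 w m)) (w m)). nra.
Qed.

Definition upd (w : Seq) (t : nat) (b : bool) : Seq := fun n => if Nat.eqb n t then b else w n.

Lemma upd_agree w t b : agree (upd w t b) w t.
Proof. intros n Hn. unfold upd. destruct (Nat.eqb_spec n t); [lia|auto]. Qed.

Lemma mass_split i f0 f1 w t :
  cyl_mass i f0 f1 w t = cyl_mass i f0 f1 (upd w t false) (S t) + cyl_mass i f0 f1 (upd w t true) (S t).
Proof.
  simpl. rewrite !(mass_ext i f0 f1 (upd w t _) w t) by apply upd_agree.
  rewrite !(hist_ext f0 f1 (upd w t _) w t) by apply upd_agree.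
  unfold upd; rewrite !Nat.eqb_refl.
  rewrite <- Rmult_plus_distr_l, prob_sum. ring.
Qed.

Lemma small_cyl i f0 f1 t : exists w, cyl_mass i f0 f1 w t <= (1/2)^t.
Proof.
  induction t as [|t [w Hw]].
  - exists (fun _ => false). simpl. lra.
  - pose proof (mass_split i f0 f1 w t).
    pose proof (mass_ge0 i f0 f1 (upd w t false) (S t)).
    pose proof (mass_ge0 i f0 f1 (upd w t true) (S t)).
    simpl ((1/2)^(S t)).
    destruct (Rle_dec (cyl_mass i f0 f1 (upd w t false) (S t)) (cyl_mass i f0 f1 (upd w t true) (S t))).
    + exists (upd w t false). lra.
    + exists (upd w t true). lra.
Qed.

Lemma half_small eps : 0 < eps -> exists n, (1/2)^n < eps.
Proof.
  intros H. destruct (pow_lt_1_zero (1/2)) with (y:=eps) as [N HN]; auto.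
  rewrite Rabs_right; lra.
  exists N. specialize (HN N (le_n _)). rewrite Rabs_right in HN; auto.
  apply Rle_ge, pow_le; lra.
Qed.

Definition sumL {X} (g : X -> R) (l : list X) : R := fold_right (fun x acc => g x + acc) 0 l.

Lemma sumL_app {X} (g : X -> R) l1 l2 : sumL g (l1 ++ l2) = sumL g l1 + sumL g l2.
Proof. induction l1; simpl; [lra|]. rewrite IHl1; lra. Qed.

Lemma sumL_ge0 {X} (g : X -> R) l : (forall x, 0 <= g x) -> 0 <= sumL g l.
Proof. intros H; induction l; simpl; [lra|]. specialize (H a); lra. Qed.

Lemma sumL_le {X} (g h : X -> R) l : (forall x, g x <= h x) -> sumL g l <= sumL h l.
Proof. intros H; induction l; simpl; [lra|]. specialize (H a); lra. Qed.

Lemma sumL_ext {X} (g h : X -> R) l : (forall x, g x = h x) -> sumL g l = sumL h l.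
Proof. intros H; induction l; simpl; [lra|]. rewrite H, IHl; lra. Qed.

Lemma sumL_plus {X} (g h : X -> R) l : sumL (fun x => g x + h x) l = sumL g l + sumL h l.
Proof. induction l; simpl; [lra|]. rewrite IHl; lra. Qed.

Lemma sumL_scal {X} (g : X -> R) c l : sumL (fun x => c * g x) l = c * sumL g l.
Proof. induction l; simpl; [lra|]. rewrite IHl; lra. Qed.

Lemma sumL_map {X Y} (g : Y -> R) (f : X -> Y) l : sumL g (map f l) = sumL (fun x => g (f x)) l.
Proof. induction l; simpl; [lra|]. rewrite IHl; lra. Qed.

Lemma sumL_filter {X} (g : X -> R) (p : X -> bool) l :
  sumL g (filter p l) = sumL (fun x => if p x then g x else 0) l.
Proof. induction l; simpl; [lra|]. destruct (p a); simpl; rewrite IHl; lra. Qed.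

Lemma sumL_flat_map {X Y} (g : Y -> R) (f : X -> list Y) l :
  sumL g (flat_map f l) = sumL (fun x => sumL g (f x)) l.
Proof. induction l; simpl; [lra|]. rewrite sumL_app, IHl; lra. Qed.

Lemma sumL_seq (a : nat -> R) n : sumL a (seq 0 n) = psum a n.
Proof. induction n; [reflexivity|]. rewrite seq_S, sumL_app, IHn. simpl. lra. Qed.

Lemma psum_ext_lt a b N : (forall n, (n < N)%nat -> a n = b n) -> psum a N = psum b N.
Proof. induction N; intros H; simpl; auto. rewrite IHN by (intros; apply H; lia). rewrite H by lia; auto. Qed.

Lemma psum_le a b N : (forall n, (n < N)%nat -> a n <= b n) -> psum a N <= psum b N.
Proof. induction N; intros H; simpl; [lra|]. pose proof (H N (Nat.lt_succ_diag_r _)). pose proof (IHN (fun n Hn => H n (Nat.lt_lt_succ_r _ _ Hn))). lra. Qed.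

Lemma psum_ge0 a N : (forall n, 0 <= a n) -> 0 <= psum a N.
Proof. induction N; intros H; simpl; [lra|]. pose proof (H N); specialize (IHN H); lra. Qed.

Lemma psum_monoN a M N : (forall n, 0 <= a n) -> (M <= N)%nat -> psum a M <= psum a N.
Proof. intros H; induction 1; [lra|]. simpl. specialize (H m); lra. Qed.

Lemma psum_plus a b N : psum (fun n => a n + b n) N = psum a N + psum b N.
Proof. induction N; simpl; [lra|]. rewrite IHN; lra. Qed.

Lemma psum_scal a c N : psum (fun n => c * a n) N = c * psum a N.
Proof. induction N; simpl; [lra|]. rewrite IHN; lra. Qed.

Lemma psum_shift a N : psum a (S N) = a O + psum (fun n => a (S n)) N.
Proof. induction N; simpl in *; [lra|]. rewrite IHN; lra. Qed.

Lemma psum_geom N : psum (fun n => (1/2)^(S n)) N <= 1.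
Proof.
  assert (H : psum (fun n => (1/2)^(S n)) N = 1 - (1/2)^N).
  { induction N; simpl in *; [lra|]. rewrite IHN. lra. }
  rewrite H. pose proof (pow_le (1/2) N). lra.
Qed.

Lemma psum_S a N : psum a (S N) = psum a N + a N.
Proof. reflexivity. Qed.

Lemma psum_diag (a : nat -> nat -> R) N : (forall m e, 0 <= a m e) ->
  psum (fun k => psum (fun m => a m (k - m)%nat) (S k)) N <= psum (fun m => psum (a m) N) N.
Proof.
  intros Ha.
  assert (E : psum (fun k => psum (fun m => a m (k - m)%nat) (S k)) N
             = psum (fun m => psum (a m) (N - m)) N).
  { induction N; [reflexivity|]. rewrite psum_S, IHN, (psum_S (fun m => psum (a m) (S N - m))).
    replace (S N - N)%nat with 1%nat by lia. rewrite psum_S.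
    rewrite Nat.sub_diag. simpl psum at 3.
    rewrite (psum_ext_lt (fun m => psum (a m) (S N - m)) (fun m => psum (a m) (N - m) + a m (N - m)%nat)).
    2:{ intros n Hn. replace (S N - n)%nat with (S (N - n)) by lia. reflexivity. }
    rewrite psum_plus. simpl (psum (a N) 1). lra. }
  rewrite E. apply psum_le. intros m Hm. apply psum_monoN; auto. lia.
Qed.

Lemma psum_nth {X} (g : option X -> R) l N : (forall x, 0 <= g x) -> g None = 0 ->
  psum (fun n => g (nth n l None)) N <= sumL g l.
Proof.
  intros H0 H1. revert N; induction l as [|x l IH]; intros N.
  - simpl. rewrite (psum_ext_lt _ (fun _ => 0)). 2:{ intros n _; destruct n; auto. }
    clear. induction N; simpl; lra.
  - destruct N. { simpl. pose proof (sumL_ge0 g l H0). specialize (H0 x). lra. }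
    rewrite psum_shift. simpl. specialize (IH N). lra.
Qed.

Definition lmass i f0 f1 (l : list (Seq * nat)) : R :=
  sumL (fun p => cyl_mass i f0 f1 (fst p) (snd p)) l.

Definition omass i f0 f1 (o : option (Seq * nat)) : R :=
  match o with Some p => cyl_mass i f0 f1 (fst p) (snd p) | None => 0 end.

Lemma lmass_ge0 i f0 f1 l : 0 <= lmass i f0 f1 l.
Proof. apply sumL_ge0. intros; apply mass_ge0. Qed.

Lemma omass_ge0 i f0 f1 o : 0 <= omass i f0 f1 o.
Proof. destruct o; simpl; [apply mass_ge0|lra]. Qed.


Definition Dk (F : nat -> nat -> list (Seq*nat)) k : list (Seq*nat) :=
  flat_map (fun m => F m (k - m)%nat) (seq 0 (S k)).
Definition Lp (F : nat -> nat -> list (Seq*nat)) k : list (option (Seq*nat)) :=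
  flat_map (fun k' => None :: map Some (Dk F k')) (seq 0 k).

Lemma Lp_S F k : Lp F (S k) = Lp F k ++ None :: map Some (Dk F k).
Proof. unfold Lp. rewrite seq_S, flat_map_app. simpl. rewrite app_nil_r. reflexivity. Qed.

Lemma Lp_len F k : (k <= length (Lp F k))%nat.
Proof. induction k; [simpl; lia|]. rewrite Lp_S, length_app. simpl. lia. Qed.

Lemma Lp_prefix F k n : (k <= n)%nat -> exists r, Lp F n = Lp F k ++ r.
Proof.
  induction 1. { exists nil. rewrite app_nil_r; auto. }
  destruct IHle as [r Hr]. exists (r ++ None :: map Some (Dk F m)).
  rewrite Lp_S, Hr, app_assoc. reflexivity.
Qed.

Lemma sumL_Lp i f0 f1 F N :
  sumL (omass i f0 f1) (Lp F N) = psum (fun k => psum (fun m => lmass i f0 f1 (F m (k - m)%nat)) (S k)) N.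
Proof.
  induction N; [reflexivity|]. rewrite Lp_S, sumL_app, IHN, psum_S. f_equal.
  simpl. rewrite sumL_map. unfold Dk. rewrite sumL_flat_map, sumL_seq. simpl omass. 
  rewrite Rplus_0_l. reflexivity.
Qed.

Lemma null_fam i f0 f1 (A : Seq -> Prop) :
  (forall eps, 0 < eps -> exists F : nat -> nat -> list (Seq*nat),
     (forall v, A v -> exists m e p, In p (F m e) /\ cyl (fst p) (snd p) v) /\
     (forall N, psum (fun m => psum (fun e => lmass i f0 f1 (F m e)) N) N <= eps)) ->
  null i f0 f1 A.
Proof.
  intros H eps Heps.
  destruct (H (eps/2)) as [F [Hc Hs]]; [lra|].
  destruct (half_small (eps/2)) as [K HK]; [lra|].
  set (G := fun n => nth n (Lp F (S n)) None).
  set (sm := fun n => proj1_sig (constructive_indefinite_description _ (small_cyl i f0 f1 (n+1+K)))).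
  assert (Hsm : forall n, cyl_mass i f0 f1 (sm n) (n+1+K) <= (1/2)^(n+1+K)).
  { intros n. unfold sm. destruct (constructive_indefinite_description _ _); simpl; auto. }
  exists (fun n => match G n with Some p => fst p | None => sm n end).
  exists (fun n => match G n with Some p => snd p | None => (n+1+K)%nat end).
  split.
  - intros v Hv. destruct (Hc v Hv) as [m [e [p [Hp Hcy]]]].
    set (k := (m + e)%nat).
    assert (HD : In p (Dk F k)).
    { unfold Dk. apply in_flat_map. exists m. split. apply in_seq. unfold k; lia.
      replace (k - m)%nat with e by (unfold k; lia). auto. }
    destruct (In_nth_error _ _ HD) as [j Hj].
    set (n := (length (Lp F k) + S j)%nat).
    assert (H1 : nth_error (Lp F (S k)) n = Some (Some p)).
    { rewrite Lp_S. unfold n. rewrite nth_error_app2 by lia.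
      replace (length (Lp F k) + S j - length (Lp F k))%nat with (S j) by lia. simpl.
      rewrite nth_error_map, Hj. reflexivity. }
    assert (Hkn : (k <= n)%nat) by (pose proof (Lp_len F k); unfold n; lia).
    destruct (Lp_prefix F (S k) (S n)) as [r Hr]; [lia|].
    assert (HG : G n = Some p).
    { unfold G. rewrite Hr. rewrite app_nth1.
      - apply nth_error_nth. auto.
      - apply nth_error_Some. rewrite H1. discriminate. }
    exists n. rewrite HG. auto.
  - intros N.
    apply Rle_trans with (psum (fun n => omass i f0 f1 (G n) + eps/2 * (1/2)^(S n)) N).
    + apply psum_le. intros n Hn.
      assert (0 <= eps/2 * (1/2)^(S n)) by (apply Rmult_le_pos; [lra| apply pow_le; lra]).
      destruct (G n) as [p|]; unfold omass.
      * lra.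
      * eapply Rle_trans. apply Hsm. rewrite pow_add.
        replace (n+1)%nat with (S n) by lia. pose proof (pow_le (1/2) (S n)). 
        rewrite Rplus_0_l. rewrite (Rmult_comm (eps/2)). apply Rmult_le_compat_l; lra.
    + rewrite psum_plus, psum_scal.
      assert (Hg := psum_geom N).
      assert (H2 : psum (fun n => omass i f0 f1 (G n)) N <= eps/2).
      { apply Rle_trans with (psum (fun n => omass i f0 f1 (nth n (Lp F N) None)) N).
        - apply psum_le. intros n Hn. unfold G.
          destruct (Lp_prefix F (S n) N) as [r Hr]; [lia|]. rewrite Hr.
          destruct (Nat.lt_ge_cases n (length (Lp F (S n)))).
          + rewrite app_nth1 by auto. lra.
          + rewrite (nth_overflow (Lp F (S n))) by auto. simpl. apply omass_ge0.
        - eapply Rle_trans. apply psum_nth. apply omass_ge0. reflexivity.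
          rewrite sumL_Lp. eapply Rle_trans. apply (psum_diag (fun m e => lmass i f0 f1 (F m e))). intros; apply lmass_ge0. auto. }
      nra.
Qed.

Lemma null_sub i f0 f1 (A B : Seq -> Prop) : (forall v, A v -> B v) -> null i f0 f1 B -> null i f0 f1 A.
Proof.
  intros H HB eps He. destruct (HB eps He) as [ws [ts [H1 H2]]].
  exists ws, ts. split; auto.
Qed.

Lemma null_empty i f0 f1 (A : Seq -> Prop) : (forall v, ~ A v) -> null i f0 f1 A.
Proof.
  intros H. apply null_fam. intros eps He. exists (fun _ _ => nil). split.
  - intros v Hv. exfalso. eapply H; eauto.
  - intros N. unfold lmass. simpl.
    assert (E : forall M, psum (fun _ : nat => psum (fun _ : nat => 0) N) M = 0).
    { intros M. assert (E2 : psum (fun _ : nat => 0) N = 0) by (induction N; simpl; lra).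
      rewrite E2. induction M; simpl; lra. }
    rewrite E. lra.
Qed.

Lemma null_cunion i f0 f1 (A : nat -> Seq -> Prop) :
  (forall m, null i f0 f1 (A m)) -> null i f0 f1 (fun v => exists m, A m v).
Proof.
  intros H. apply null_fam. intros eps He.
  assert (Hm : forall m, exists c : (nat -> Seq) * (nat -> nat),
    (forall v, A m v -> exists k, cyl (fst c k) (snd c k) v) /\
    (forall N, psum (fun k => cyl_mass i f0 f1 (fst c k) (snd c k)) N <= eps * (1/2)^(S m))).
  { intros m. assert (0 < eps * (1/2)^(S m)) by (apply Rmult_lt_0_compat; [lra|apply pow_lt; lra]).
    destruct (H m _ H0) as [ws [ts [H1 H2]]]. exists (ws, ts). simpl. auto. }
  set (W := fun m => proj1_sig (constructive_indefinite_description _ (Hm m))).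
  assert (HW : forall m, (forall v, A m v -> exists k, cyl (fst (W m) k) (snd (W m) k) v) /\
    (forall N, psum (fun k => cyl_mass i f0 f1 (fst (W m) k) (snd (W m) k)) N <= eps * (1/2)^(S m))).
  { intros m. unfold W. destruct (constructive_indefinite_description _ _). simpl. auto. }
  exists (fun m e => (fst (W m) e, snd (W m) e) :: nil). split.
  - intros v [m Hv]. destruct (proj1 (HW m) v Hv) as [k Hk].
    exists m, k, (fst (W m) k, snd (W m) k). simpl. auto.
  - intros N. unfold lmass. simpl.
    apply Rle_trans with (psum (fun m => eps * (1/2)^(S m)) N).
    + apply psum_le. intros m _. eapply Rle_trans; [|apply (proj2 (HW m) N)].
      right. apply psum_ext_lt. intros; lra.
    + rewrite psum_scal. pose proof (psum_geom N). nra.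
Qed.

Lemma null_union2 i f0 f1 (A B : Seq -> Prop) :
  null i f0 f1 A -> null i f0 f1 B -> null i f0 f1 (fun v => A v \/ B v).
Proof.
  intros HA HB. apply (null_sub _ _ _ _ (fun v => exists m, (if Nat.eqb m 0 then A else B) v)).
  - intros v [H|H]; [exists 0%nat|exists 1%nat]; auto.
  - apply null_cunion. intros m; destruct (Nat.eqb m 0); auto.
Qed.

Fixpoint ext (u : Seq) (t0 : nat) (d : nat) : list Seq :=
  match d with
  | O => u :: nil
  | S d' => flat_map (fun x => upd x (t0 + d') false :: upd x (t0 + d') true :: nil) (ext u t0 d')
  end.

Definition pd (Q : Seq -> nat -> Prop) := forall v w t, agree v w t -> (Q v t <-> Q w t).
Definition alive (Q : Seq -> nat -> Prop) t0 d x := forall e, (e < d)%nat -> ~ Q x (t0 + e)%nat.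
Definition stopP (Q : Seq -> nat -> Prop) t0 d x := alive Q t0 d x /\ Q x (t0 + d)%nat.
Definition cb (P : Prop) : bool := if excluded_middle_informative P then true else false.
Lemma cb_spec P : cb P = true <-> P.
Proof. unfold cb; destruct (excluded_middle_informative P); split; auto; discriminate. Qed.

Definition SL Q u t0 e : list (Seq * nat) :=
  map (fun x => (x, (t0 + e)%nat)) (filter (fun x => cb (stopP Q t0 e x)) (ext u t0 e)).

Lemma agree_sym v w t : agree v w t -> agree w v t.
Proof. intros H n Hn; symmetry; auto. Qed.
Lemma agree_le v w s t : (s <= t)%nat -> agree v w t -> agree v w s.
Proof. intros H1 H n Hn; apply H; lia. Qed.

Lemma ext_cover u t0 v : agree v u t0 -> forall d, exists x, In x (ext u t0 d) /\ agree v x (t0 + d).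
Proof.
  intros H d. induction d as [|d [x [Hx Ha]]].
  - exists u. simpl. rewrite Nat.add_0_r. auto.
  - exists (upd x (t0 + d) (v (t0 + d)%nat)). split.
    + simpl. apply in_flat_map. exists x. split; auto.
      destruct (v (t0 + d)%nat); simpl; auto.
    + intros n Hn. unfold upd. destruct (Nat.eqb_spec n (t0 + d)); [subst; auto|]. apply Ha; lia.
Qed.

Lemma min_nat (P : nat -> Prop) : (exists n, P n) -> exists n, P n /\ forall m, (m < n)%nat -> ~ P m.
Proof.
  intros [n Hn]. induction n as [n IH] using (well_founded_induction Wf_nat.lt_wf).
  destruct (classic (exists m, (m < n)%nat /\ P m)) as [[m [Hm Pm]]|Hno].
  - apply (IH m Hm Pm).
  - exists n. split; auto. intros m Hm Pm. apply Hno; eauto.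
Qed.

Lemma SL_cover Q u t0 v : pd Q -> agree v u t0 -> (exists t, (t0 <= t)%nat /\ Q v t) ->
  exists e p, In p (SL Q u t0 e) /\ cyl (fst p) (snd p) v.
Proof.
  intros Hpd Hu [t [Ht HQ]].
  destruct (min_nat (fun e => Q v (t0 + e)%nat)) as [e [He Hmin]].
  { exists (t - t0)%nat. replace (t0 + (t - t0))%nat with t by lia. auto. }
  destruct (ext_cover u t0 v Hu e) as [x [Hx Ha]].
  exists e, (x, (t0 + e)%nat). split.
  - unfold SL. apply in_map_iff. exists x. split; auto. apply filter_In. split; auto.
    apply cb_spec. split.
    + intros e' He' HQ'. apply (Hmin e' He'). apply (Hpd v x); auto.
      apply (agree_le _ _ _ (t0+e)); auto. lia.
    + apply (Hpd x v); auto. apply agree_sym; auto.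
  - simpl. intros n Hn. apply Ha; auto.
Qed.

Lemma sumL_ext_S (g : Seq -> R) u t0 d :
  sumL g (ext u t0 (S d)) = sumL (fun x => g (upd x (t0 + d) false) + g (upd x (t0 + d) true)) (ext u t0 d).
Proof.
  simpl. rewrite sumL_flat_map. apply sumL_ext. intros x. simpl. lra.
Qed.

Lemma SL_bound_b b f0 f1 Q u t0 : pd Q -> forall N,
  psum (fun e => sumL (fun x => if cb (stopP Q t0 e x) then cyl_mass b f0 f1 x (t0 + e) else 0) (ext u t0 e)) N
  + sumL (fun x => if cb (alive Q t0 N x) then cyl_mass b f0 f1 x (t0 + N) else 0) (ext u t0 N)
  = cyl_mass b f0 f1 u t0.
Proof.
  intros Hpd N. induction N as [|d IH].
  - simpl. unfold cb at 1. destruct (excluded_middle_informative _) as [_|n].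
    + rewrite Nat.add_0_r. lra.
    + exfalso. apply n. intros e He. lia.
  - rewrite <- IH. rewrite psum_S. rewrite sumL_ext_S.
    rewrite Rplus_assoc. f_equal.
    rewrite <- sumL_plus. apply sumL_ext. intros x.
    assert (Hal : forall bb, alive Q t0 (S d) (upd x (t0 + d) bb) <-> alive Q t0 (S d) x).
    { intros bb. unfold alive. split; intros H e He HQ; apply (H e He);
        [apply (Hpd x (upd x (t0+d) bb))|apply (Hpd (upd x (t0+d) bb) x)]; auto;
        [apply agree_sym|]; apply (agree_le _ _ _ (t0 + d)); try lia; apply upd_agree. }
    assert (Hm : forall bb, cyl_mass b f0 f1 (upd x (t0 + d) bb) (t0 + S d) = cyl_mass b f0 f1 (upd x (t0 + d) bb) (S (t0 + d))).
    { intros; f_equal; lia. }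
    rewrite !Hm.
    unfold cb. 
    destruct (excluded_middle_informative (alive Q t0 (S d) (upd x (t0 + d) false))) as [a1|a1];
    destruct (excluded_middle_informative (alive Q t0 (S d) (upd x (t0 + d) true))) as [a2|a2];
    destruct (excluded_middle_informative (alive Q t0 (S d) x)) as [a3|a3];
    destruct (excluded_middle_informative (alive Q t0 d x)) as [a4|a4];
    destruct (excluded_middle_informative (stopP Q t0 d x)) as [a5|a5];
    try (rewrite Hal in a1); try (rewrite Hal in a2); try tauto.
    all: first [ lra | (rewrite <- mass_split; lra)
      | (exfalso; destruct a5 as [_ HQ]; apply (a3 d); auto; fail)
      | (exfalso; apply a4; intros e He; apply a3; lia)
      | (exfalso; apply a4, a5)
      | (exfalso; apply a5; split; auto; apply NNPP; intros HQ; apply a3; intros e He;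
         destruct (Nat.eq_dec e d); [subst; auto|]; apply a4; lia) ].
Qed.

Lemma SL_bound a b f0 f1 Q u t0 c : pd Q -> 0 <= c ->
  (forall w t, Q w t -> cyl_mass a f0 f1 w t <= c * cyl_mass b f0 f1 w t) ->
  forall N, psum (fun e => lmass a f0 f1 (SL Q u t0 e)) N <= c * cyl_mass b f0 f1 u t0.
Proof.
  intros Hpd Hc HQ N. rewrite <- (SL_bound_b b f0 f1 Q u t0 Hpd N).
  apply Rle_trans with (c * psum (fun e => sumL (fun x => if cb (stopP Q t0 e x) then cyl_mass b f0 f1 x (t0 + e) else 0) (ext u t0 e)) N).
  - rewrite <- psum_scal. apply psum_le. intros e _.
    unfold lmass, SL. rewrite sumL_map, sumL_filter, <- sumL_scal. apply sumL_le.
    intros x. simpl. destruct (cb (stopP Q t0 e x)) eqn:E; [|lra].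
    apply (proj1 (cb_spec _)) in E. apply HQ, E.
  - assert (0 <= sumL (fun x => if cb (alive Q t0 N x) then cyl_mass b f0 f1 x (t0 + N) else 0) (ext u t0 N)).
    { apply sumL_ge0. intros x; destruct (cb _); [apply mass_ge0|lra]. }
    nra.
Qed.

Lemma meas_empty : measurable (fun _ => False).
Proof.
  apply (meas_ext (fun v => ~ cyl (fun _ => false) 0 v)).
  - intros v; split; [intros H; apply H; intros n Hn; lia| tauto].
  - apply meas_compl, meas_cyl.
Qed.

Definition enum (n : nat) : Seq := fun i => Nat.testbit n i.

Lemma enum_ex t : forall w, exists n, agree w (enum n) t.
Proof.
  induction t as [|t IH]; intros w.
  - exists 0%nat. intros n Hn; lia.
  - destruct (IH (fun i => w (S i))) as [n Hn].
    exists (2 * n + (if w 0%nat then 1 else 0))%nat.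
    intros i Hi. unfold enum. destruct i as [|i].
    + destruct (w 0%nat); [rewrite Nat.testbit_odd_0|rewrite Nat.add_0_r, Nat.testbit_even_0]; auto.
    + destruct (w 0%nat); [rewrite Nat.testbit_odd_succ by lia|rewrite Nat.add_0_r, Nat.testbit_even_succ by lia];
      apply (Hn i); lia.
Qed.

Lemma meas_pd (P : Seq -> Prop) t : (forall v w, agree v w t -> (P v <-> P w)) -> measurable P.
Proof.
  intros HP.
  apply (meas_ext (fun v => exists n, (if cb (P (enum n)) then cyl (enum n) t else (fun _ => False)) v)).
  - intros v. split.
    + intros [n Hn]. destruct (cb (P (enum n))) eqn:E; [|contradiction].
      apply (proj1 (cb_spec _)) in E. apply (HP v (enum n)); auto.
    + intros Hv. destruct (enum_ex t v) as [n Hn]. exists n.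
      assert (E : cb (P (enum n)) = true) by (apply cb_spec; apply (HP v (enum n)); auto).
      rewrite E. auto.
  - apply meas_union. intros n. destruct (cb _); [apply meas_cyl|apply meas_empty].
Qed.

Lemma meas_or (A B : Seq -> Prop) : measurable A -> measurable B -> measurable (fun v => A v \/ B v).
Proof.
  intros HA HB. apply (meas_ext (fun v => exists n, (if Nat.eqb n 0 then A else B) v)).
  - intros v; split. { intros [n H]; destruct (Nat.eqb n 0); auto. }
    intros [H|H]; [exists 0%nat|exists 1%nat]; auto.
  - apply meas_union. intros n; destruct (Nat.eqb n 0); auto.
Qed.

Lemma meas_and (A B : Seq -> Prop) : measurable A -> measurable B -> measurable (fun v => A v /\ B v).
Proof.
  intros HA HB. apply (meas_ext (fun v => ~ (~ A v \/ ~ B v))).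
  - intros v; split; [intros H; split; apply NNPP; tauto| tauto].
  - apply meas_compl, meas_or; apply meas_compl; auto.
Qed.

Lemma meas_all (A : nat -> Seq -> Prop) : (forall n, measurable (A n)) -> measurable (fun v => forall n, A n v).
Proof.
  intros H. apply (meas_ext (fun v => ~ exists n, ~ A n v)).
  - intros v; split; [intros H1 n; apply NNPP; intros H2; apply H1; eauto| intros H1 [n Hn]; auto].
  - apply meas_compl, meas_union. intros n; apply meas_compl; auto.
Qed.

Definition Sj f0 f1 j : Seq -> Prop := fun w =>
  forall n, exists t, cyl_mass (negb j) f0 f1 w t <= (1/2)^n * cyl_mass j f0 f1 w t.
Definition Hj f0 f1 j c : Seq -> Prop := fun w =>
  forall N, exists t, (N <= t)%nat /\ c * cyl_mass j f0 f1 w t <= cyl_mass (negb j) f0 f1 w t.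

Lemma ratio_mass j f0 f1 w :
  (forall n, 0 < prob (fsel j f0 f1 (hist f0 f1 w n)) (w n)) -> forall t,
  ratio (fsel j f0 f1) (fsel (negb j) f0 f1) (hist f0 f1 w) w t * cyl_mass j f0 f1 w t
  = cyl_mass (negb j) f0 f1 w t.
Proof.
  intros Hp t. induction t as [|t IH]; simpl; [lra|].
  rewrite <- IH. specialize (Hp t). field. lra.
Qed.

Lemma ratio_ge0 fj fk h w t : 0 <= ratio fj fk h w t.
Proof.
  induction t; simpl; [lra|]. apply Rmult_le_pos; auto.
  unfold Rdiv. apply Rmult_le_pos. apply prob_ge0.
  destruct (Req_dec (prob (fj (h t)) (w t)) 0) as [E|E].
  - rewrite E, Rinv_0. lra.
  - left. apply Rinv_0_lt_compat. pose proof (prob_ge0 (fj (h t)) (w t)). lra.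
Qed.

Lemma A_S f0 f1 j w : deriv_zero f0 f1 j w -> Sj f0 f1 j w.
Proof.
  intros [Hp Hc] n. assert (Hn : 0 < (1/2)^n) by (apply pow_lt; lra).
  destruct (Hc _ Hn) as [N HN]. specialize (HN N (le_n _)).
  exists N. rewrite <- (ratio_mass j f0 f1 w Hp N).
  unfold R_dist in HN. rewrite Rminus_0_r in HN.
  pose proof (Rle_abs (ratio (fsel j f0 f1) (fsel (negb j) f0 f1) (hist f0 f1 w) w N)).
  pose proof (mass_ge0 j f0 f1 w N). nra.
Qed.

Lemma psum_zero N : psum (fun _ => 0) N = 0.
Proof. induction N; simpl; lra. Qed.

Lemma psum_first X N : psum (fun m => if Nat.eqb m 0 then X else 0) N = if Nat.eqb N 0 then 0 else X.
Proof.
  induction N; [reflexivity|]. rewrite psum_S, IHN. destruct N; simpl; lra.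
Qed.

Lemma Sj_null f0 f1 j : null (negb j) f0 f1 (Sj f0 f1 j).
Proof.
  apply null_fam. intros eps He. destruct (half_small eps He) as [n Hn].
  set (Q := fun w t => cyl_mass (negb j) f0 f1 w t <= (1/2)^n * cyl_mass j f0 f1 w t).
  set (u := fun _ : nat => false).
  assert (Hpd : pd Q).
  { intros v w t Ha. unfold Q. rewrite !(mass_ext _ f0 f1 v w t Ha). tauto. }
  exists (fun m e => if Nat.eqb m 0 then SL Q u 0 e else nil). split.
  - intros v Hv. destruct (SL_cover Q u 0 v Hpd) as [e [p [Hp Hcy]]].
    + intros k Hk; lia.
    + destruct (Hv n) as [t Ht]. exists t. split; [lia|auto].
    + exists 0%nat, e, p. simpl. auto.
  - intros N. apply Rle_trans with (psum (fun m => if Nat.eqb m 0 then (1/2)^n else 0) N).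
    + apply psum_le. intros m _. destruct (Nat.eqb m 0).
      * eapply Rle_trans. apply (SL_bound (negb j) j f0 f1 Q u 0 ((1/2)^n) Hpd).
        apply pow_le; lra. intros w t Hq; exact Hq. simpl. lra.
      * unfold lmass. simpl. rewrite psum_zero. lra.
    + rewrite psum_first. destruct (Nat.eqb N 0); lra.
Qed.

Lemma Sj_meas f0 f1 j : measurable (Sj f0 f1 j).
Proof.
  apply meas_all. intros n. apply meas_union. intros t.
  apply (meas_pd _ t). intros v w Ha. rewrite !(mass_ext _ f0 f1 v w t Ha). tauto.
Qed.

Lemma mass_zero_after j f0 f1 w n0 :
  prob (fsel j f0 f1 (hist f0 f1 w n0)) (w n0) = 0 ->
  forall t, (S n0 <= t)%nat -> cyl_mass j f0 f1 w t = 0.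
Proof.
  intros H t Ht. pose proof (mass_mono j f0 f1 w (S n0) t Ht).
  pose proof (mass_ge0 j f0 f1 w t). simpl in H0. rewrite H in H0. lra.
Qed.

Lemma notA_H f0 f1 j w : ~ deriv_zero f0 f1 j w -> exists n, Hj f0 f1 j ((1/2)^n) w.
Proof.
  intros HnA.
  destruct (classic (forall n, 0 < prob (fsel j f0 f1 (hist f0 f1 w n)) (w n))) as [Hp|Hp].
  - assert (Hnc : ~ Un_cv (ratio (fsel j f0 f1) (fsel (negb j) f0 f1) (hist f0 f1 w) w) 0).
    { intros Hc. apply HnA. split; auto. }
    apply not_all_ex_not in Hnc. destruct Hnc as [eps Heps].
    apply imply_to_and in Heps. destruct Heps as [He Hno].
    destruct (half_small eps He) as [n Hn]. exists n. intros N.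
    apply Classical_Pred_Type.not_ex_all_not with (n := N) in Hno.
    apply not_all_ex_not in Hno. destruct Hno as [t Ht].
    apply imply_to_and in Ht. destruct Ht as [HtN Ht].
    exists t. split; [lia|].
    rewrite <- (ratio_mass j f0 f1 w Hp t).
    unfold R_dist in Ht. rewrite Rminus_0_r, Rabs_right in Ht by (apply Rle_ge, ratio_ge0).
    pose proof (mass_ge0 j f0 f1 w t). nra.
  - apply not_all_ex_not in Hp. destruct Hp as [n0 Hn0].
    assert (E : prob (fsel j f0 f1 (hist f0 f1 w n0)) (w n0) = 0).
    { pose proof (prob_ge0 (fsel j f0 f1 (hist f0 f1 w n0)) (w n0)). lra. }
    exists 0%nat. intros N. exists (N + S n0)%nat. split; [lia|].
    rewrite (mass_zero_after j f0 f1 w n0 E) by lia.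
    pose proof (mass_ge0 (negb j) f0 f1 w (N + S n0)). lra.
Qed.

Lemma H_null f0 f1 j c (B : Seq -> Prop) : 0 < c -> null (negb j) f0 f1 B ->
  null j f0 f1 (fun w => B w /\ Hj f0 f1 j c w).
Proof.
  intros Hc HB. apply null_fam. intros eps He.
  destruct (HB (eps * c)) as [ws [ts [Hcov Hsum]]]; [nra|].
  set (Q := fun w t => c * cyl_mass j f0 f1 w t <= cyl_mass (negb j) f0 f1 w t).
  assert (Hpd : pd Q).
  { intros v w t Ha. unfold Q. rewrite !(mass_ext _ f0 f1 v w t Ha). tauto. }
  exists (fun m e => SL Q (ws m) (ts m) e). split.
  - intros v [Hv HH]. destruct (Hcov v Hv) as [m Hm].
    destruct (SL_cover Q (ws m) (ts m) v Hpd Hm) as [e [p [Hp Hcy]]].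
    + destruct (HH (ts m)) as [t [Ht1 Ht2]]. exists t; auto.
    + exists m, e, p. auto.
  - intros N. apply Rle_trans with (psum (fun m => / c * cyl_mass (negb j) f0 f1 (ws m) (ts m)) N).
    + apply psum_le. intros m _. apply SL_bound; auto.
      * left; apply Rinv_0_lt_compat; auto.
      * intros w t Hq. unfold Q in Hq.
        apply (Rmult_le_reg_l c); auto. rewrite <- Rmult_assoc, Rinv_r by lra. lra.
    + rewrite psum_scal. specialize (Hsum N).
      apply Rle_trans with (/ c * (eps * c)).
      * apply Rmult_le_compat_l; auto. left; apply Rinv_0_lt_compat; auto.
      * right. field. lra.
Qed.

Theorem theorem2 (T : Test) :
  test_measurable T -> anonymous T -> non_counterfactual T -> reasonable T ->
  ~ test_equiv T Dtest -> ~ error_free T.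
Proof.
  intros Hmeas _ _ Hreas Hneq Hef. apply Hneq. intros f0 f1 i.
  set (X1 := fun j w => Sj f0 f1 j w /\ T w f0 f1 <> outb j).
  set (X2 := fun j w => ~ deriv_zero f0 f1 j w /\ T w f0 f1 = outb j).
  assert (X1k : forall j, null (negb j) f0 f1 (X1 j)).
  { intros j. apply (null_sub _ _ _ _ (Sj f0 f1 j)); [intros v [H _]; auto|]. apply Sj_null. }
  assert (X1j : forall j, null j f0 f1 (X1 j)).
  { intros j. apply NNPP. intros Hn.
    apply (Hreas f0 f1 j (X1 j)); auto.
    - apply meas_and. apply Sj_meas. apply meas_compl, Hmeas.
    - apply null_empty. intros v [[_ H1] H2]. auto. }
  assert (X2k : forall j, null (negb j) f0 f1 (X2 j)).
  { intros j. apply (null_sub _ _ _ _ (fun w => T w f0 f1 = outb j)); [intros v [_ H]; auto|]. apply Hef. }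
  assert (X2j : forall j, null j f0 f1 (X2 j)).
  { intros j. apply (null_sub _ _ _ _ (fun v => exists n, (fun n w => T w f0 f1 = outb j /\ Hj f0 f1 j ((1/2)^n) w) n v)).
    - intros v [H1 H2]. destruct (notA_H f0 f1 j v H1) as [n Hn]. exists n. auto.
    - apply null_cunion. intros n. apply H_null. apply pow_lt; lra. apply Hef. }
  assert (Hi1 : forall j, null i f0 f1 (X1 j)).
  { intros j; destruct i, j; [apply (X1j true)|apply (X1k false)|apply (X1k true)|apply (X1j false)]. }
  assert (Hi2 : forall j, null i f0 f1 (X2 j)).
  { intros j; destruct i, j; [apply (X2j true)|apply (X2k false)|apply (X2k true)|apply (X2j false)]. }
  apply (null_sub _ _ _ _ (fun w => (X1 true w \/ X1 false w) \/ (X2 true w \/ X2 false w))).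
  - intros w Hw. unfold Dtest in Hw.
    destruct (excluded_middle_informative (deriv_zero f0 f1 true w)) as [d1|d1].
    + left; left. split; auto. apply A_S; auto.
    + destruct (excluded_middle_informative (deriv_zero f0 f1 false w)) as [d0|d0].
      * left; right. split; auto. apply A_S; auto.
      * right. destruct (T w f0 f1) eqn:E.
        -- right. split; auto.
        -- exfalso; auto.
        -- left. split; auto.
  - apply null_union2; apply null_union2; auto.
Qed.
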